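(* Let $\Lambda$ be an artin algebra and let $(g_i: X\to M_i)_{i\in I}$ be a family of nonzero maps of $\Lambda$-modules with each $M_i$ indecomposable. Then this family is a fork if and only if $g_i\notin\sum_{j\neq i}\operatorname{Hom}(M_j,M_i)\,g_j$ for all $i\in I$.
   Context: Modules are finite length left $\Lambda$-modules. A map $g: X\to M$ is left minimal if the image of $g$ is not contained in any proper direct summand of $M$. A family of maps $(g_i: X\to M_i)_{i\in I}$ is a fork if for every finite subset $J\subseteq I$ the map $(g_i)_{i\in J}: X\to\bigoplus_{i\in J}M_i$ is left minimal. Here $\sum_{j\neq i}\operatorname{Hom}(M_j,M_i)g_j$ denotes the set of finite sums of maps $p_jg_j$ with $j\neq i$ and $p_j: M_j\to M_i$. *)

(* Defs.v *)
From Stdlib Require List.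
From HB Require Import structures.
From mathcomp Require Import all_boot all_algebra.
Set Implicit Arguments. Unset Strict Implicit.
Import GRing.Theory.
Local Open Scope ring_scope.
Section DS.
Variables (L : pzRingType) (J : finType) (M : J -> lmodType L).
Definition dsum := {dffun forall j : J, M j}.
HB.instance Definition _ := Choice.on dsum.
Definition ds0 : dsum := [ffun j => 0].
Definition dsadd (u v : dsum) : dsum := [ffun j => u j + v j].
Definition dsopp (u : dsum) : dsum := [ffun j => - u j].
Definition dsscale (a : L) (u : dsum) : dsum := [ffun j => a *: u j].
Lemma dsaddA : associative dsadd.
Proof. by move=> u v w; apply/ffunP=> j; rewrite !ffunE addrA. Qed.
Lemma dsaddC : commutative dsadd.
Proof. by move=> u v; apply/ffunP=> j; rewrite !ffunE addrC. Qed.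
Lemma dsadd0 : left_id ds0 dsadd.
Proof. by move=> u; apply/ffunP=> j; rewrite !ffunE add0r. Qed.
HB.instance Definition _ := GRing.isNmodule.Build dsum dsaddA dsaddC dsadd0.
Lemma dsaddN : left_inverse ds0 dsopp dsadd.
Proof. by move=> u; apply/ffunP=> j; rewrite !ffunE addNr. Qed.
HB.instance Definition _ := GRing.Nmodule_isZmodule.Build dsum dsaddN.
Lemma dsscaleA a b (u : dsum) : dsscale a (dsscale b u) = dsscale (a * b) u.
Proof. by apply/ffunP=> j; rewrite !ffunE scalerA. Qed.
Lemma dsscale1 : left_id 1 dsscale.
Proof. by move=> u; apply/ffunP=> j; rewrite !ffunE scale1r. Qed.
Lemma dsscaleDr : right_distributive dsscale +%R.
Proof. by move=> a u v; apply/ffunP=> j; rewrite !ffunE scalerDr. Qed.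
Lemma dsscaleDl (u : dsum) : {morph dsscale^~ u : a b / a + b}.
Proof. by move=> a b; apply/ffunP=> j; rewrite !ffunE scalerDl. Qed.
HB.instance Definition _ := GRing.Zmodule_isLmodule.Build L dsum dsscaleA dsscale1 dsscaleDr dsscaleDl.
End DS.

Definition is_submod (L : pzRingType) (V : lmodType L) (S : V -> Prop) : Prop :=
  [/\ S 0, (forall u v, S u -> S v -> S (u + v)) & (forall (a : L) u, S u -> S (a *: u))].

Definition complementary (L : pzRingType) (V : lmodType L) (S T : V -> Prop) : Prop :=
  [/\ is_submod S, is_submod T,
      (forall v, S v -> T v -> v = 0)
    & (forall v, exists s t, [/\ S s, T t & v = s + t])].

Definition direct_summand (L : pzRingType) (V : lmodType L) (S : V -> Prop) : Prop :=
  exists T, complementary S T.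

Definition proper_sub (L : pzRingType) (V : lmodType L) (S : V -> Prop) : Prop :=
  exists v, ~ S v.

Definition left_minimal (L : pzRingType) (X : Type) (V : lmodType L) (g : X -> V) : Prop :=
  ~ exists S : V -> Prop, [/\ direct_summand S, proper_sub S & forall x, S (g x)].

Definition indecomposable (L : pzRingType) (V : lmodType L) : Prop :=
  (exists v : V, v <> 0) /\
  forall S T : V -> Prop, complementary S T ->
    (forall v, S v -> v = 0) \/ (forall v, T v -> v = 0).

Definition finite_length (L : pzRingType) (V : lmodType L) : Prop :=
  exists n : nat, forall (m : nat) (S : nat -> V -> Prop),
    (forall k, is_submod (S k)) ->
    (forall k, (k < m)%N -> (forall v, S k v -> S k.+1 v) /\ (exists v, S k.+1 v /\ ~ S k v)) ->
    (m <= n)%N.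

Definition is_ideal (k : comNzRingType) (A : k -> Prop) : Prop :=
  [/\ A 0, (forall x y, A x -> A y -> A (x + y)) & (forall a x, A x -> A (a * x))].

Definition artinian_ring (k : comNzRingType) : Prop :=
  forall A : nat -> k -> Prop, (forall n, is_ideal (A n)) ->
    (forall n x, A n.+1 x -> A n x) ->
    exists n, forall m, (n <= m)%N -> forall x, A n x -> A m x.

Definition artin_algebra (L : pzRingType) : Prop :=
  exists (k : comNzRingType) (phi : {rmorphism k -> L}),
    [/\ artinian_ring k,
        (forall a x, phi a * x = x * phi a)
      & exists (n : nat) (b : 'I_n -> L), forall x : L,
          exists c : 'I_n -> k, x = \sum_(i < n) phi (c i) * b i].

(* finite subsets J of I are given as injections f : J -> I from a finite type;
   the induced map X -> (+)_{j in J} M_(f j) is x |-> (g_(f j) x)_j *)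
Definition fork (L : pzRingType) (X : lmodType L) (I : Type) (M : I -> lmodType L)
    (g : forall i, X -> M i) : Prop :=
  forall (J : finType) (f : J -> I), injective f ->
    left_minimal (fun x : X => [ffun j => g (f j) x] : dsum (fun j => M (f j))).

Definition in_sum_others (L : pzRingType) (X : lmodType L) (I : Type) (M : I -> lmodType L)
    (g : forall i, X -> M i) (i : I) : Prop :=
  exists (s : seq I) (p : forall j, {linear M j -> M i}),
    (forall j, Stdlib.Lists.List.In j s -> j <> i) /\
    forall x, g i x = \sum_(j <- s) p j (g j x).

(* Main.v *)
Require Import Defs.
From HB Require Import structures.
From mathcomp Require Import all_boot all_algebra.
From Stdlib Require Import Classical ClassicalEpsilon ProofIrrelevance FunctionalExtensionality Lia.
From mathcomp Require Import zify.
Set Implicit Arguments. Unset Strict Implicit.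
Import GRing.Theory.
Local Open Scope ring_scope.


Section Gen.
Variables (L : pzRingType) (V : lmodType L).
Implicit Types (U : V -> Prop) (phi : V -> V).

Definition ulin U phi :=
  [/\ forall u1 u2, U u1 -> U u2 -> phi (u1 + u2) = phi u1 + phi u2,
      forall a u, U u -> phi (a *: u) = a *: phi u
    & forall u, U u -> U (phi u)].
Definition nilpo U phi := exists n, forall u, U u -> iter n phi u = 0.
Definition injo U phi := forall u, U u -> phi u = 0 -> u = 0.
Definition surjo U phi := forall u, U u -> exists x, U x /\ phi x = u.
Definition splitirr U := forall A B : V -> Prop, is_submod A -> is_submod B ->
  (forall v, A v -> U v) -> (forall v, B v -> U v) ->
  (forall v, A v -> B v -> v = 0) ->
  (forall u, U u -> exists a b, [/\ A a, B b & u = a + b]) ->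
  (forall v, A v -> v = 0) \/ (forall v, B v -> v = 0).

Lemma sm0 U : is_submod U -> U 0. Proof. by case. Qed.
Lemma smD U u v : is_submod U -> U u -> U v -> U (u + v). Proof. by case=> _ H _; apply: H. Qed.
Lemma smZ U a u : is_submod U -> U u -> U (a *: u). Proof. by case=> _ _ H; apply: H. Qed.
Lemma smN U u : is_submod U -> U u -> U (- u).
Proof. by move=> HU Hu; rewrite -scaleN1r; apply: smZ. Qed.
Lemma smB U u v : is_submod U -> U u -> U v -> U (u - v).
Proof. by move=> HU Hu Hv; apply: smD => //; apply: smN. Qed.

Section UL.
Variables (U : V -> Prop) (phi : V -> V).
Hypotheses (HU : is_submod U) (Hl : ulin U phi).
Lemma ulU u : U u -> U (phi u). Proof. by move=> A; case: Hl => _ _ H; exact: H. Qed.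
Lemma ulD u1 u2 : U u1 -> U u2 -> phi (u1 + u2) = phi u1 + phi u2. Proof. by move=> A B; case: Hl => H _ _; exact: H. Qed.
Lemma ulZ a u : U u -> phi (a *: u) = a *: phi u. Proof. by move=> A; case: Hl => _ H _; exact: H. Qed.
Lemma ul0 : phi 0 = 0.
Proof. by rewrite -(scale0r (0 : V)) ulZ ?scale0r //; apply: sm0. Qed.
Lemma ulN u : U u -> phi (- u) = - phi u.
Proof. by move=> Hu; rewrite -scaleN1r ulZ // scaleN1r. Qed.
Lemma ulB u1 u2 : U u1 -> U u2 -> phi (u1 - u2) = phi u1 - phi u2.
Proof. by move=> H1 H2; rewrite ulD ?ulN //; apply: smN. Qed.
End UL.

Lemma ulin_iter U phi n : is_submod U -> ulin U phi -> ulin U (iter n phi).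
Proof.
move=> HU Hl; elim: n => [|n [IH1 IH2 IH3]]; first by split.
split=> [u1 u2 H1 H2|a u H|u H] /=.
- by rewrite IH1 // (ulD Hl) //; apply: IH3.
- by rewrite IH2 // (ulZ Hl) //; apply: IH3.
- by apply: (ulU Hl); apply: IH3.
Qed.

Lemma ulin_comp U phi psi : ulin U phi -> ulin U psi -> ulin U (fun v => phi (psi v)).
Proof.
move=> H1 H2; split=> [u1 u2 A B|a u A|u A].
- by rewrite (ulD H2) // (ulD H1) //; apply: (ulU H2).
- by rewrite (ulZ H2) // (ulZ H1) //; apply: (ulU H2).
- by apply: (ulU H1); apply: (ulU H2).
Qed.

Lemma ulin_add U phi psi : ulin U phi -> ulin U psi -> is_submod U -> ulin U (fun v => phi v + psi v).
Proof.
move=> H1 H2 HU; split=> [u1 u2 A B|a u A|u A].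
- by rewrite (ulD H1) // (ulD H2) // addrACA.
- by rewrite (ulZ H1) // (ulZ H2) // scalerDr.
- by apply: smD => //; [apply: (ulU H1) | apply: (ulU H2)].
Qed.

Lemma chain_inc_stab (S : nat -> V -> Prop) : finite_length V ->
  (forall k, is_submod (S k)) -> (forall k v, S k v -> S k.+1 v) ->
  exists n, forall v, S n.+1 v -> S n v.
Proof.
move=> [N HN] Hs Hinc; apply: NNPP => Hno.
have Hstr : forall n, exists v, S n.+1 v /\ ~ S n v.
  move=> n; apply: NNPP => H; apply: Hno; exists n => v Hv; apply: NNPP => Hv'.
  by apply: H; exists v.
have := HN N.+1 S Hs (fun k _ => conj (Hinc k) (Hstr k)).
by rewrite ltnn.
Qed.

Lemma chain_dec_stab (D : nat -> V -> Prop) : finite_length V ->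
  (forall k, is_submod (D k)) -> (forall k v, D k.+1 v -> D k v) ->
  exists n, forall v, D n v -> D n.+1 v.
Proof.
move=> [N HN] Hs Hdec; apply: NNPP => Hno.
have Hstr : forall n, exists v, D n v /\ ~ D n.+1 v.
  move=> n; apply: NNPP => H; apply: Hno; exists n => v Hv; apply: NNPP => Hv'.
  by apply: H; exists v.
pose S k := D (N.+1 - k)%N.
have : (N.+1 <= N)%N.
  apply: (HN N.+1 S) => [k|k Hk]; first exact: Hs.
  rewrite /S subSS subSn //; split; [exact: Hdec | exact: Hstr].
by rewrite ltnn.
Qed.

Definition Ker U phi k := fun u => U u /\ iter k phi u = 0.
Definition Im U phi k := fun v => exists x, U x /\ v = iter k phi x.

Section Fit.
Variables (U : V -> Prop) (phi : V -> V).
Hypotheses (HU : is_submod U) (Hl : ulin U phi).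
Let Hli n := ulin_iter n HU Hl.

Lemma Ker_sub k : is_submod (Ker U phi k).
Proof.
split.
- by split; [apply: sm0 | apply: ul0 (Hli k)].
- move=> u v [Hu Hu0] [Hv Hv0]; split; first exact: smD.
  by rewrite (ulD (Hli k)) // Hu0 Hv0 addr0.
- move=> a u [Hu Hu0]; split; first exact: smZ.
  by rewrite (ulZ (Hli k)) // Hu0 scaler0.
Qed.

Lemma Im_sub k : is_submod (Im U phi k).
Proof.
split.
- by exists 0; split; [apply: sm0 | rewrite (ul0 HU (Hli k))].
- move=> u v [x [Hx ->]] [y [Hy ->]]; exists (x + y); split; first exact: smD.
  by rewrite (ulD (Hli k)).
- move=> a u [x [Hx ->]]; exists (a *: x); split; first exact: smZ.
  by rewrite (ulZ (Hli k)).
Qed.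

Lemma Ker_mono a b : (a <= b)%N -> forall u, Ker U phi a u -> Ker U phi b u.
Proof.
move=> Hab u [Hu H0]; split=> //.
by rewrite -(subnK Hab) iterD H0 (ul0 HU (Hli _)).
Qed.

Lemma Im_mono a b : (a <= b)%N -> forall v, Im U phi b v -> Im U phi a v.
Proof.
move=> Hab v [x [Hx ->]]; exists (iter (b - a)%N phi x); split.
  by apply: (ulU (Hli _)).
by rewrite -iterD addnC subnK.
Qed.

Lemma Ker_prop n : (forall u, Ker U phi n.+1 u -> Ker U phi n u) ->
  forall m u, Ker U phi (n + m) u -> Ker U phi n u.
Proof.
move=> H m; elim: m => [|m IH] u; first by rewrite addn0.
move=> [Hu H0]; apply: H; split=> //.
have HK : Ker U phi n (phi u).
  by apply: IH; split; [exact: (ulU Hl Hu) | rewrite -iterSr -addnS].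
by case: HK => _; rewrite iterSr.
Qed.

Lemma Im_prop n : (forall v, Im U phi n v -> Im U phi n.+1 v) ->
  forall m v, Im U phi n v -> Im U phi (n + m) v.
Proof.
move=> H m; elim: m => [|m IH] v; first by rewrite addn0.
move=> /IH [x [Hx ->]].
have [y [Hy Hxy]] := H (iter n phi x) (ex_intro _ x (conj Hx erefl)).
exists y; split=> //.
have -> : (n + m.+1 = m + n.+1)%N by lia.
by rewrite (addnC n m) !iterD Hxy.
Qed.

Lemma fitting : finite_length V ->
  exists q, (forall u, U u -> exists a b, [/\ Im U phi q.+1 a, Ker U phi q.+1 b & u = a + b]) /\
     (forall v, Im U phi q.+1 v -> Ker U phi q.+1 v -> v = 0).
Proof.
move=> Hfl.
have [n1 Hn1] := chain_inc_stab Hfl Ker_sub (fun k => Ker_mono (leqnSn k)).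
have [n2 Hn2] := chain_dec_stab Hfl Im_sub (fun k => Im_mono (leqnSn k)).
set p := (n1 + n2).+1.
have HK : forall u, Ker U phi (p + p) u -> Ker U phi p u.
  move=> u Hu; apply: (Ker_mono (a := n1)); first by rewrite /p; lia.
  move: Hu; have -> : (p + p = n1 + (p + p - n1))%N by rewrite /p; lia.
  exact: Ker_prop.
have HI : forall v, Im U phi p v -> Im U phi (p + p) v.
  move=> v Hv; have -> : (p + p = n2 + (p + p - n2))%N by rewrite /p; lia.
  apply: Im_prop => //; apply: (Im_mono (b := p)) => //; rewrite /p; lia.
exists (n1 + n2); split.
- move=> u Hu.
  have [y [Hy Hxy]] := HI (iter p phi u) (ex_intro _ u (conj Hu erefl)).
  exists (iter p phi y), (u - iter p phi y); split.
  + by exists y.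
  + split; first by apply: smB => //; apply: (ulU (Hli _)).
    rewrite (ulB HU (Hli p)) //; last by apply: (ulU (Hli _)).
    by rewrite Hxy iterD subrr.
  + by rewrite addrC subrK.
- move=> v [x [Hx ->]] [_ H0].
  have HK' : Ker U phi (p + p) x by split=> //; rewrite iterD.
  by case: (HK x HK').
Qed.
End Fit.

Lemma dichotomy U phi : finite_length V -> is_submod U -> splitirr U -> ulin U phi ->
  nilpo U phi \/ (injo U phi /\ surjo U phi).
Proof.
move=> Hfl HU Hsi Hl.
have [q [Hdec Hint]] := fitting HU Hl Hfl.
have Hli := ulin_iter q.+1 HU Hl.
have HIU : forall v, Im U phi q.+1 v -> U v.
  by move=> v [x [Hx ->]]; exact: (ulU Hli Hx).
have [HA|HB] := Hsi _ _ (Im_sub HU Hl q.+1) (Ker_sub HU Hl q.+1)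
  HIU (fun v H => proj1 H) Hint Hdec.
- left; exists q.+1 => u Hu; apply: HA; by exists u.
- right; split.
  + move=> u Hu H0; apply: HB; split=> //.
    by rewrite iterSr H0 (ul0 HU (ulin_iter q HU Hl)).
  + move=> u Hu; have [a [b [[x [Hx ->]] Hb ->]]] := Hdec u Hu.
    rewrite (HB b Hb) addr0; exists (iter q phi x); split.
      by apply: (ulU (ulin_iter q HU Hl)).
    by rewrite iterS.
Qed.

Lemma nilp_surj U phi : (exists u, U u /\ u <> 0) -> nilpo U phi -> surjo U phi -> False.
Proof.
move=> [u0 [Hu0 Hne]] [n Hn] Hs.
have Hk : forall k u, U u -> exists x, U x /\ iter k phi x = u.
  elim=> [|k IH] u Hu; first by exists u.
  have [x [Hx <-]] := Hs u Hu; have [y [Hy <-]] := IH x Hx.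
  by exists y; rewrite iterS.
have [y [Hy Hyu]] := Hk n u0 Hu0; apply: Hne; by rewrite -Hyu Hn.
Qed.

Lemma nilp_inj U phi : is_submod U -> ulin U phi -> (exists u, U u /\ u <> 0) ->
  nilpo U phi -> injo U phi -> False.
Proof.
move=> HU Hl [u0 [Hu0 Hne]] [n Hn] Hi.
have Hk : forall k u, U u -> iter k phi u = 0 -> u = 0.
  elim=> [|k IH] u Hu //= H; apply: Hi => //; apply: IH; first exact: (ulU Hl).
  by rewrite -iterSr.
by apply: Hne; apply: (Hk n) => //; apply: Hn.
Qed.

Lemma inv_on U w : is_submod U -> ulin U w -> injo U w -> surjo U w ->
  exists w', ulin U w' /\ forall u, U u -> U (w' u) /\ w (w' u) = u.
Proof.
move=> HU Hl Hi Hs.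
pose w' u := epsilon (inhabits (0 : V)) (fun x => U x /\ w x = u).
have Hw' : forall u, U u -> U (w' u) /\ w (w' u) = u.
  by move=> u Hu; apply: (epsilon_spec _ _ (Hs u Hu)).
exists w'; split=> //; split.
- move=> u1 u2 H1 H2.
  have [A1 B1] := Hw' u1 H1; have [A2 B2] := Hw' u2 H2.
  have [A3 B3] := Hw' (u1 + u2) (smD HU H1 H2).
  apply/eqP; rewrite -subr_eq0; apply/eqP; apply: Hi.
    by apply: smB => //; apply: smD.
  have HD : U (w' u1 + w' u2) by apply: smD.
  by rewrite (ulB HU Hl) // (ulD Hl) // B1 B2 B3 subrr.
- move=> a u H1.
  have [A1 B1] := Hw' u H1; have [A3 B3] := Hw' (a *: u) (smZ a HU H1).
  apply/eqP; rewrite -subr_eq0; apply/eqP; apply: Hi.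
    by apply: smB => //; apply: smZ.
  have HD : U (a *: w' u) by apply: smZ.
  by rewrite (ulB HU Hl) // (ulZ Hl) // B1 B3 subrr.
- by move=> u Hu; case: (Hw' u Hu).
Qed.

Lemma nil_add U phi psi : finite_length V -> is_submod U -> splitirr U ->
  (exists u, U u /\ u <> 0) ->
  ulin U phi -> ulin U psi -> nilpo U phi -> nilpo U psi -> nilpo U (fun v => phi v + psi v).
Proof.
move=> Hfl HU Hsi Hne H1 H2 N1 N2.
have Hw := ulin_add H1 H2 HU.
have [//|[Hi Hs]] := dichotomy Hfl HU Hsi Hw.
have [w' [Hw' Hinv]] := inv_on HU Hw Hi Hs.
have Hchi := ulin_comp H1 Hw'.
have [Nchi|[_ Schi]] := dichotomy Hfl HU Hsi Hchi; last first.
  exfalso; apply: (nilp_surj Hne N1) => u Hu.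
  have [x [Hx <-]] := Schi u Hu; exists (w' x); split=> //; exact: (proj1 (Hinv x Hx)).
have Hrho := ulin_comp H2 Hw'.
have Erho : forall u, U u -> psi (w' u) = u - phi (w' u).
  by move=> u Hu; rewrite -{2}(proj2 (Hinv u Hu)) addrC addKr.
have Irho : injo U (fun v => psi (w' v)).
  move=> u Hu; rewrite Erho // => /eqP; rewrite subr_eq0 => /eqP Hfix.
  case: Nchi => n Hn.
  have : forall k, iter k (fun v => phi (w' v)) u = u.
    by elim=> [|k IH] //=; rewrite IH.
  by move=> /(_ n) <-; apply: Hn.
have [Nrho|[_ Srho]] := dichotomy Hfl HU Hsi Hrho.
  by exfalso; apply: (nilp_inj HU Hrho Hne Nrho Irho).
exfalso; apply: (nilp_surj Hne N2) => u Hu.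
have [x [Hx <-]] := Srho u Hu; exists (w' x); split=> //; exact: (proj1 (Hinv x Hx)).
Qed.

Lemma nil_sum (T : Type) (r : seq T) (a : T -> V -> V) U :
  finite_length V -> is_submod U -> splitirr U -> (exists u, U u /\ u <> 0) ->
  (forall t, ulin U (a t)) -> (forall t, nilpo U (a t)) ->
  ulin U (fun v => \sum_(t <- r) a t v) /\ nilpo U (fun v => \sum_(t <- r) a t v).
Proof.
move=> Hfl HU Hsi Hne Hl Hn; elim: r => [|t r [IH1 IH2]].
  have -> : (fun v => \sum_(t <- [::]) a t v) = fun _ => 0.
    by apply: functional_extensionality => v; rewrite big_nil.
  split; last by exists 1%N.
  by split=> *; rewrite ?addr0 ?scaler0 //; apply: sm0.
have -> : (fun v => \sum_(t0 <- t :: r) a t0 v) = fun v => a t v + \sum_(t0 <- r) a t0 v.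
  by apply: functional_extensionality => v; rewrite big_cons.
split; first exact: ulin_add.
exact: nil_add.
Qed.

Lemma nilp_id U phi : (exists u, U u /\ u <> 0) -> (forall u, U u -> phi u = u) ->
  nilpo U phi -> False.
Proof.
move=> [u0 [Hu0 Hne]] Hid [n Hn]; apply: Hne; rewrite -(Hn u0 Hu0).
by elim: n {Hn} => [|n IH] //=; rewrite -IH Hid.
Qed.

End Gen.


Definition mklin (L : pzRingType) (U V : lmodType L) (f : U -> V) (H : linear f) : {linear U -> V} :=
  HB.pack f (GRing.isLinear.Build L U V *:%R f H).
Lemma mklinE (L : pzRingType) (U V : lmodType L) (f : U -> V) (H : linear f) x : mklin H x = f x.
Proof. by []. Qed.

Section DSL.
Variables (L : pzRingType) (J : finType) (N : J -> lmodType L).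
Lemma dsD (u v : dsum N) j : (u + v) j = u j + v j.
Proof. by rewrite /GRing.add /= ffunE. Qed.
Lemma dsZ a (u : dsum N) j : (a *: u) j = a *: u j.
Proof. by rewrite /GRing.scale /= ffunE. Qed.
Lemma ds0E j : (0 : dsum N) j = 0.
Proof. by rewrite /GRing.zero /= ffunE. Qed.
Lemma dsN (u : dsum N) j : (- u) j = - u j.
Proof. by rewrite /GRing.opp /= ffunE. Qed.
Lemma dsB (u v : dsum N) j : (u - v) j = u j - v j.
Proof. by rewrite dsD dsN. Qed.
Lemma dsP (u v : dsum N) : (forall j, u j = v j) -> u = v.
Proof. by move=> H; apply/ffunP. Qed.
Lemma ds_sum (T : Type) (r : seq T) (F : T -> dsum N) j :
  (\sum_(t <- r) F t) j = \sum_(t <- r) F t j.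
Proof.
elim: r => [|t r IH]; first by rewrite !big_nil ds0E.
by rewrite !big_cons dsD IH.
Qed.
Lemma proj_lin (j : J) : linear (fun v : dsum N => v j).
Proof. by move=> a u v; rewrite dsD dsZ. Qed.
Definition dsproj j := mklin (proj_lin j).
End DSL.

Section FL.
Variable (L : pzRingType).

Definition flenP (V : lmodType L) (P : V -> Prop) (n : nat) :=
  forall m (S : nat -> V -> Prop), (forall k, is_submod (S k)) -> (forall k v, S k v -> P v) ->
    (forall k, (k < m)%N -> (forall v, S k v -> S k.+1 v) /\ (exists v, S k.+1 v /\ ~ S k v)) ->
    (m <= n)%N.

Definition chain_to (V : lmodType L) (P : V -> Prop) c (X : V -> Prop) :=
  exists T : nat -> V -> Prop, [/\ forall k, is_submod (T k), forall k v, T k v -> P v,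
    forall k, (k < c)%N -> (forall v, T k v -> T k.+1 v) /\ (exists v, T k.+1 v /\ ~ T k v)
    & forall v, T c v <-> X v].

Lemma chain_to_le (V : lmodType L) (P : V -> Prop) n c X : flenP P n -> chain_to P c X -> (c <= n)%N.
Proof. by move=> H [T [A B C _]]; apply: (H c T). Qed.

Lemma chain_to0 (V : lmodType L) (P : V -> Prop) X : is_submod X -> (forall v, X v -> P v) -> chain_to P 0 X.
Proof. by move=> HX HP; exists (fun _ => X); split. Qed.

Lemma chain_to_step (V : lmodType L) (P : V -> Prop) c X X' :
  chain_to P c X -> is_submod X' -> (forall v, X' v -> P v) -> (forall v, X v -> X' v) ->
  exists c', [/\ (c <= c')%N, chain_to P c' X' & (exists v, X' v /\ ~ X v) -> (c < c')%N].
Proof.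
move=> [T [Ts TP Tst Tc]] HX' HP' Hinc.
have [Hgr|Hngr] := classic (exists v, X' v /\ ~ X v).
- exists c.+1; split=> //.
  exists (fun k => if (k <= c)%N then T k else X'); split.
  + by move=> k; case: ifP.
  + by move=> k v; case: ifP => _; [apply: TP | apply: HP'].
  + move=> k Hk; case: (ltnP k c) => Hkc.
      by rewrite (ltnW Hkc) ?Hkc; apply: Tst.
    have Ek : k = c by apply/eqP; rewrite eqn_leq Hkc -ltnS Hk.
    rewrite Ek leqnn; split.
      by move=> v /Tc /Hinc.
    by case: Hgr => v [A B]; exists v; split=> // /Tc.
  + by move=> v; rewrite ltnn.
- exists c; split; [by [] | | by move=> H; exfalso; apply: Hngr].
  exists T; split=> // v; split; first by move/Tc/Hinc.
  by move=> Hv; apply/Tc; apply: NNPP => H; apply: Hngr; exists v; split.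
Qed.

Lemma flen_split (V W : lmodType L) (P Q : V -> Prop) (rho : {linear V -> W}) a b :
  flenP Q a -> flenP (fun _ : W => True) b -> (forall v, P v -> rho v = 0 -> Q v) ->
  flenP P (a + b).
Proof.
move=> Ha Hb HPQ m S Hs HP Hstep.
pose Kp k := fun v => S k v /\ rho v = 0.
pose Ip k := fun w => exists v, S k v /\ w = rho v.
have KpS : forall k, is_submod (Kp k).
  move=> k; split.
  - by split; [apply: sm0 | rewrite linear0].
  - by move=> u v [A B] [C D]; split; [apply: smD | rewrite linearD B D addr0].
  - by move=> c u [A B]; split; [apply: smZ | rewrite linearZZ B scaler0].
have IpS : forall k, is_submod (Ip k).
  move=> k; split.
  - by exists 0; split; [apply: sm0 | rewrite linear0].
  - by move=> u v [x [A ->]] [y [C ->]]; exists (x + y); split; [apply: smD | rewrite linearD].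
  - by move=> c u [x [A ->]]; exists (c *: x); split; [apply: smZ | rewrite linearZZ].
have Claim : forall j, (j <= m)%N -> exists c1 c2, [/\ (j <= c1 + c2)%N,
    chain_to Q c1 (Kp j) & chain_to (fun _ => True) c2 (Ip j)].
  elim=> [|j IH] Hj.
    exists 0%N, 0%N; split=> //; apply: chain_to0 => //.
    by move=> v [A B]; apply: HPQ => //; apply: (HP 0%N).
  have [c1 [c2 [Hc C1 C2]]] := IH (ltnW Hj).
  have [st1 st2] := Hstep j Hj.
  have KQ : forall v, Kp j.+1 v -> Q v by move=> v [A B]; apply: HPQ => //; apply: HP A.
  have KK : forall v, Kp j v -> Kp j.+1 v by move=> v [A B]; split=> //; apply: st1.
  have II : forall v, Ip j v -> Ip j.+1 v by move=> w [v [A B]]; exists v; split=> //; apply: st1.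
  have [c1' [L1 C1' G1]] := chain_to_step C1 (KpS j.+1) KQ KK.
  have [c2' [L2 C2' G2]] := chain_to_step C2 (IpS j.+1) (fun _ _ => I) II.
  exists c1', c2'; split=> //.
  have [H1|H1] := classic (exists v, Kp j.+1 v /\ ~ Kp j v).
    by have := G1 H1; lia.
  have [H2|H2] := classic (exists v, Ip j.+1 v /\ ~ Ip j v).
    by have := G2 H2; lia.
  exfalso; case: st2 => v [Sv nSv]; apply: nSv.
  have : Ip j (rho v).
    apply: NNPP => H; apply: H2; exists (rho v); split=> //; by exists v.
  move=> [v' [Sv' Ev]].
  have : Kp j (v - v').
    apply: NNPP => H; apply: H1; exists (v - v'); split=> //; split.
      by apply: smB => //; apply: st1.
    by rewrite linearB Ev subrr.
  move=> [A _]; rewrite -(subrK v' v); exact: smD.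
have [c1 [c2 [Hc C1 C2]]] := Claim m (leqnn m).
have := chain_to_le Ha C1; have := chain_to_le Hb C2; lia.
Qed.

Lemma flen_dsum (J : finType) (N : J -> lmodType L) :
  (forall j, finite_length (N j)) -> finite_length (dsum N).
Proof.
move=> HN.
have Hr : forall r : seq J, exists n, flenP (fun v : dsum N => forall j, j \notin r -> v j = 0) n.
  elim=> [|j r [n IH]].
    exists 0%N => m S Hs HP Hst; case: m Hst => // m /(_ 0%N erefl) [_ [v [Sv nSv]]].
    have Hv0 : v = 0 by apply: dsP => j; rewrite ds0E; apply: (HP 1%N).
    by exfalso; apply: nSv; rewrite Hv0; apply: sm0.
  have [b Hb] := HN j.
  exists (n + b)%N; apply: (flen_split (rho := dsproj N j) IH).
    by move=> m S Hs _ Hst; apply: (Hb m S).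
  move=> v Hv Hv0 j' Hj'.
  case: (eqVneq j' j) => [->|Hne]; first exact: Hv0.
  by apply: Hv; rewrite in_cons negb_or Hne.
have [n Hn] := Hr (enum J).
exists n => m S Hs Hst; apply: (Hn m S) => // k v _ j; by rewrite mem_enum.
Qed.
End FL.


Section Sing.
Variables (L : pzRingType) (J : finType) (N : J -> lmodType L).

Definition dsing (k : J) (m : N k) : dsum N :=
  finfun (fun j => match k =P j with ReflectT e => eq_rect k N m j e | ReflectF _ => 0 end).

Lemma dsing_eq k (m : N k) : dsing m k = m.
Proof.
rewrite /dsing ffunE; case: eqP => // e.
by rewrite (eq_irrelevance e erefl).
Qed.

Lemma dsing_neq k (m : N k) j : k != j -> dsing m j = 0.
Proof. by move=> H; rewrite /dsing ffunE; case: eqP => // e; rewrite e eqxx in H. Qed.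

Lemma dsing_lin k : linear (@dsing k).
Proof.
move=> a u v; apply: dsP => j; rewrite dsD dsZ.
case: (eqVneq k j) => [<-|H]; first by rewrite !dsing_eq.
by rewrite !dsing_neq // scaler0 addr0.
Qed.

Lemma dsing_sum (v : dsum N) : \sum_k dsing (v k) = v.
Proof.
apply: dsP => j; rewrite ds_sum (bigD1 j) //= dsing_eq big1 ?addr0 // => k Hk.
by rewrite dsing_neq // eq_sym.
Qed.
End Sing.

Section Gen2.
Variables (L : pzRingType) (V : lmodType L).

Definition valid (X : Type) (g : X -> V) (U : V -> Prop) :=
  exists C, [/\ complementary U C, forall x, C (g x) & exists u, U u /\ u <> 0].

Lemma compl_sym (S T : V -> Prop) : complementary S T -> complementary T S.
Proof.
case=> A B C D; split=> // [v Hv Hv'|v]; first exact: C.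
by have [s [t [E F ->]]] := D v; exists t, s; split=> //; rewrite addrC.
Qed.

Lemma minimal_exists (X : Type) (g : X -> V) : finite_length V ->
  (exists U, valid g U) -> exists U, valid g U /\ splitirr U.
Proof.
move=> Hfl [U0 HU0]; apply: NNPP => Hno.
have Hstep : forall U, valid g U -> exists A, [/\ valid g A, forall v, A v -> U v & exists v, U v /\ ~ A v].
  move=> U [C [[HU HC HUC HUCd] HgC Hne]] .
  have : ~ splitirr U by move=> H; apply: Hno; exists U; split=> //; exists C.
  move=> Hnsi.
  have [A [B [[HA HB [AU BU] AB ABd] nAB]]] : exists A B, [/\ is_submod A, is_submod B,
     (forall v, A v -> U v) /\ (forall v, B v -> U v), (forall v, A v -> B v -> v = 0) &
     (forall u, U u -> exists a b, [/\ A a, B b & u = a + b])] /\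
     ~ ((forall v, A v -> v = 0) \/ (forall v, B v -> v = 0)).
    apply: NNPP => H; apply: Hnsi => A B HA HB AU BU AB ABd; apply: NNPP => H'.
    by apply: H; exists A, B; split.
  have nA : exists a, A a /\ a <> 0.
    apply: NNPP => H; apply: nAB; left => v Hv; apply: NNPP => Hv0; apply: H; by exists v.
  have nB : exists b, B b /\ b <> 0.
    apply: NNPP => H; apply: nAB; right => v Hv; apply: NNPP => Hv0; apply: H; by exists v.
  pose C' := fun v => exists c b, [/\ C c, B b & v = c + b].
  exists A; split=> //.
  - exists C'; split=> //.
    + split=> //.
      * split.
        - by exists 0, 0; split; [apply: sm0 | apply: sm0 | rewrite addr0].
        - move=> u v [c [b [Hc Hb ->]]] [c' [b' [Hc' Hb' ->]]].
          exists (c + c'), (b + b'); split; [exact: smD | exact: smD | by rewrite addrACA].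
        - move=> a u [c [b [Hc Hb ->]]].
          exists (a *: c), (a *: b); split; [exact: smZ | exact: smZ | by rewrite scalerDr].
      * move=> v Hv [c [b [Hc Hb Ev]]].
        have Hc0 : c = 0.
          apply: HUC => //; have -> : c = v - b by rewrite Ev addrK.
          by apply: smB => //; [apply: AU | apply: BU].
        move: Ev; rewrite Hc0 add0r => Ev; apply: AB => //; by rewrite Ev.
      * move=> v; have [s [t [Hs Ht ->]]] := HUCd v.
        have [a [b [Ha Hb ->]]] := ABd s Hs.
        exists a, (t + b); split=> //; first by exists t, b.
        by rewrite -addrA (addrC b).
    + by move=> x; exists (g x), 0; split=> //; [apply: sm0 | rewrite addr0].
  - case: nB => b [Hb Hb0]; exists b; split; first exact: BU.
    by move=> Ha; apply: Hb0; apply: AB.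
have [n Hn] := Hfl.
have Hch : forall m, exists S : nat -> V -> Prop, [/\ forall k, is_submod (S k),
  forall k, (k < m)%N -> (forall v, S k v -> S k.+1 v) /\ (exists v, S k.+1 v /\ ~ S k v)
  & valid g (S 0%N)].
  elim=> [|m [S [Ss Sst Sv]]].
    exists (fun _ => U0); split=> //.
    by case: HU0 => C [[]].
  have [A [HA AS [v [Sv0 nA]]]] := Hstep _ Sv.
  exists (fun k => if k is k'.+1 then S k' else A); split=> //.
  - by case=> [|k] //; case: HA => C [[]].
  - case=> [|k] Hk; first by split=> //; exists v.
    exact: Sst.
have [S [Ss Sst _]] := Hch n.+1.
have := Hn n.+1 S Ss Sst; by rewrite ltnn.
Qed.

Section Proj.
Variables (U C : V -> Prop).
Hypothesis HUC : complementary U C.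
Definition eps v := epsilon (inhabits (0 : V)) (fun u => U u /\ C (v - u)).
Lemma eps_spec v : U (eps v) /\ C (v - eps v).
Proof.
apply: (epsilon_spec _ (fun u => U u /\ C (v - u))).
case: HUC => _ _ _ D; have [s [t [Hs Ht ->]]] := D v.
by exists s; split=> //; rewrite addrC addKr.
Qed.
Lemma eps_uniq v u : U u -> C (v - u) -> eps v = u.
Proof.
move=> Hu Hc; have [A B] := eps_spec v.
case: HUC => HU HC HI _.
apply/eqP; rewrite -subr_eq0; apply/eqP; apply: HI.
  exact: smB.
have -> : eps v - u = (v - u) - (v - eps v) by rewrite opprB [in RHS]addrC addrA subrK.
exact: smB.
Qed.
Lemma eps_lin : linear eps.
Proof.
move=> a u v; case: HUC => HU HC _ _.
have [A1 B1] := eps_spec u; have [A2 B2] := eps_spec v.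
apply: eps_uniq; first by apply: smD => //; apply: smZ.
have -> : a *: u + v - (a *: eps u + eps v) = a *: (u - eps u) + (v - eps v).
  by rewrite scalerBr opprD addrACA.
by apply: smD => //; apply: smZ.
Qed.
Lemma eps_U u : U u -> eps u = u.
Proof. by move=> Hu; apply: eps_uniq => //; rewrite subrr; case: HUC => _ HC _ _; apply: sm0. Qed.
Lemma eps_C c : C c -> eps c = 0.
Proof. by move=> Hc; case: HUC => HU _ _ _; apply: eps_uniq; [apply: sm0 | rewrite subr0]. Qed.
End Proj.
End Gen2.

Lemma lin_ulin (L : pzRingType) (V : lmodType L) (U : V -> Prop) (f : V -> V) :
  linear f -> (forall u, U u -> U (f u)) -> ulin U f.
Proof.
move=> Hf HU; split=> // [u1 u2 _ _|a u _].
  exact: (linearD (mklin Hf) u1 u2).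
exact: (linearZZ (mklin Hf) a u).
Qed.

Lemma ulin_lin (L : pzRingType) (V : lmodType L) (f : V -> V) :
  ulin (fun _ => True) f -> linear f.
Proof. by move=> H a u v; rewrite (ulD H) // (ulZ H). Qed.

Lemma splitirr_ind (L : pzRingType) (V : lmodType L) : indecomposable V -> splitirr (fun _ : V => True).
Proof.
move=> [_ H] A B HA HB _ _ AB ABd; apply: H; split=> // v.
by have [a [b [Ha Hb ->]]] := ABd v I; exists a, b.
Qed.

Lemma sm_true (L : pzRingType) (V : lmodType L) : is_submod (fun _ : V => True).
Proof. by []. Qed.

Section Hard.
Variables (L : pzRingType) (J : finType) (N : J -> lmodType L) (X : Type) (gJ : X -> dsum N).
Hypotheses (HN : forall j, finite_length (N j)) (Hind : forall j, indecomposable (N j)).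

Lemma hard_core : (exists S, [/\ direct_summand S, Defs.proper_sub S & forall x, S (gJ x)]) ->
  exists k (q : forall l, N l -> N k), (forall l, linear (q l)) /\
    forall x, gJ x k = \sum_(l | l != k) q l (gJ x l).
Proof.
move=> [S [[T HST] [v nSv] HgS]].
have Hfl := flen_dsum HN.
have [U [[C [HUC HgC HUne]] Hsi]] : exists U, valid gJ U /\ splitirr U.
  apply: minimal_exists => //; exists T, S; split=> //; first exact: compl_sym.
  case: HST => HS HT HI HD; have [s [t [Hs Ht Ev]]] := HD v.
  exists t; split=> // Ht0; apply: nSv; by rewrite Ev Ht0 addr0.
have HU : is_submod U by case: HUC.
pose e := mklin (eps_lin HUC).
have eE : forall w, e w = eps U C w by [].
pose a t := fun w : dsum N => e (dsing (w t)).
pose b t := fun m : N t => e (dsing m) t.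
have blin : forall t, linear (b t).
  by move=> t c m1 m2; rewrite /b !(linearP, dsing_lin) dsD dsZ.
have alin : forall t, ulin U (a t).
  move=> t; apply: lin_ulin.
    by move=> c w1 w2; rewrite /a dsD dsZ !(linearP, dsing_lin).
  by move=> w _; rewrite /a eE; case: (eps_spec HUC (dsing (w t))).
have aiter : forall t n w, iter n.+1 (a t) w = e (dsing (iter n (b t) (w t))).
  move=> t; elim=> [|n IH] w //=.
  by rewrite -/(iter n.+1 (a t) w) IH.
have [k nb] : exists k, ~ nilpo (fun _ => True) (b k).
  apply: NNPP => H.
  have Hnil : forall t, nilpo U (a t).
    move=> t; have [n Hn] : nilpo (fun _ => True) (b t).
      by apply: NNPP => H'; apply: H; exists t.
    exists n.+1 => w _; rewrite aiter Hn //.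
    have Hd : @dsing _ _ N t 0 = 0 by exact: (linear0 (mklin (@dsing_lin _ _ N t))).
    by rewrite Hd linear0.
  have [_ Hs] := nil_sum (index_enum J) Hfl HU Hsi HUne alin Hnil.
  apply: (nilp_id HUne _ Hs) => u Hu.
  rewrite /a -linear_sum.
  by rewrite dsing_sum eE (eps_U HUC).
have bul : ulin (fun _ => True) (b k) by apply: lin_ulin.
have [//|[bi bs]] := dichotomy (HN k) (sm_true _) (splitirr_ind (Hind k)) bul.
case: (dichotomy (HN k) (sm_true _) (splitirr_ind (Hind k)) bul) => [/nb []|[binj bsur]].
have [binv [binvl binvE]] := inv_on (sm_true _) bul binj bsur.
have bL := ulin_lin binvl.
have binvK : forall m, binv (b k m) = m.
  move=> m; apply/eqP; rewrite -subr_eq0; apply/eqP; apply: binj => //.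
  by rewrite (ulB (sm_true _) bul) // (proj2 (binvE _ I)) subrr.
exists k, (fun l m => - binv (e (dsing m) k)); split.
  move=> l c m1 m2 /=.
  have -> : dsing (c *: m1 + m2) = c *: dsing m1 + dsing m2 := dsing_lin c m1 m2.
  by rewrite (eps_lin HUC) dsD dsZ bL opprD scalerN.
move=> x; set w := gJ x.
have H0 : e w = 0 by rewrite eE (eps_C HUC (HgC x)).
have : e w k = 0 by rewrite H0 ds0E.
rewrite -{1}(dsing_sum w) linear_sum ds_sum (bigD1 k) //=.
move=> /eqP; rewrite addr_eq0 => /eqP Hk.
rewrite -(binvK (w k)) /b Hk.
have -> : forall z, binv z = mklin bL z by [].
by rewrite linearN linear_sum -sumrN.
Qed.
End Hard.


Section Fin.
Variables (L : pzRingType) (I : Type) (M : I -> lmodType L).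

Fixpoint cdedup (s : seq I) : seq I :=
  match s with
  | [::] => [::]
  | x :: s' => if excluded_middle_informative (List.In x s') then cdedup s' else x :: cdedup s'
  end.

Lemma cdedup_in s x : List.In x (cdedup s) <-> List.In x s.
Proof.
elim: s => [|y s IH] //=; case: excluded_middle_informative => H /=.
  rewrite IH; split; [by right | by case=> // <-].
by rewrite IH.
Qed.

Lemma cdedup_nodup s : List.NoDup (cdedup s).
Proof.
elim: s => [|y s IH] /=; first by constructor.
case: excluded_middle_informative => H //; constructor=> //.
by rewrite cdedup_in.
Qed.

Lemma nth_in (s : seq I) d b : (b < size s)%N -> List.In (nth d s b) s.
Proof.
elim: s b => [|z s IH] [|b] //= Hb; [by left | right; exact: IH].
Qed.

Lemma nodup_inj (s : seq I) d : List.NoDup s -> forall a b, (a < size s)%N -> (b < size s)%N ->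
  nth d s a = nth d s b -> a = b.
Proof.
elim: s => [|y s IH] //= Hnd.
inversion Hnd as [|y' s' Hy Hs]; subst.
case=> [|a] [|b] //= Ha Hb.
- by move=> E; exfalso; apply: Hy; rewrite E; apply: nth_in.
- by move=> E; exfalso; apply: Hy; rewrite -E; apply: nth_in.
- by move=> E; congr S; apply: IH.
Qed.

Lemma in_nth (s : seq I) d j : List.In j s -> exists n, (n < size s)%N /\ nth d s n = j.
Proof.
elim: s => [|y s IH] //= [<-|H]; first by exists 0%N.
by have [n [Hn E]] := IH H; exists n.+1.
Qed.

Lemma sum_in0 (V : zmodType) (s : seq I) (F : I -> V) :
  (forall j, List.In j s -> F j = 0) -> \sum_(j <- s) F j = 0.
Proof.
elim: s => [|y s IH] H; first by rewrite big_nil.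
by rewrite big_cons H /= ?IH ?add0r //; [move=> j Hj; apply: H; right | left].
Qed.

Lemma sum_in_eq (V : zmodType) (s : seq I) (F G : I -> V) :
  (forall j, List.In j s -> F j = G j) -> \sum_(j <- s) F j = \sum_(j <- s) G j.
Proof.
elim: s => [|y s IH] H; first by rewrite !big_nil.
rewrite !big_cons H /=; last by left.
by rewrite IH // => j Hj; apply: H; right.
Qed.

Lemma zero_lin (U W : lmodType L) : linear (fun _ : U => (0 : W)).
Proof. by move=> a u v; rewrite scaler0 addr0. Qed.

Section Getc.
Variables (J : finType) (f : J -> I) (finj : injective f).
Definition getc (v : dsum (fun k => M (f k))) (j : I) : M j :=
  match excluded_middle_informative (exists k, f k = j) with
  | left H => let (k, e) := constructive_indefinite_description _ H in eq_rect (f k) M (v k) j e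
  | right _ => 0
  end.

Lemma getc_f v k : getc v (f k) = v k.
Proof.
rewrite /getc; case: excluded_middle_informative => [H|H]; last by exfalso; apply: H; exists k.
case: constructive_indefinite_description => k' e.
have E := finj e; subst k'.
by rewrite (proof_irrelevance _ e erefl).
Qed.

Lemma getc_lin j : linear (fun v => getc v j).
Proof.
move=> a u v; rewrite /getc; case: excluded_middle_informative => [H|H]; last first.
  by rewrite scaler0 addr0.
case: constructive_indefinite_description => k e.
by case: j / e {H}; rewrite /= dsD dsZ.
Qed.
Definition getcL j := mklin (getc_lin j).

Definition ptrans (k : J) (Q : forall l, {linear M (f l) -> M (f k)}) (j : I) : {linear M j -> M (f k)} :=
  match excluded_middle_informative (exists l, f l = j) with
  | left H => let (l, e) := constructive_indefinite_description _ H in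
      eq_rect (f l) (fun j => {linear M j -> M (f k)}) (Q l) j e
  | right _ => mklin (@zero_lin (M j) (M (f k)))
  end.

Lemma ptrans_f k Q l (m : M (f l)) : @ptrans k Q (f l) m = Q l m.
Proof.
rewrite /ptrans; case: excluded_middle_informative => [H|H]; last by exfalso; apply: H; exists l.
case: constructive_indefinite_description => l' e.
have E := finj e; subst l'.
by rewrite (proof_irrelevance _ e erefl).
Qed.
End Getc.
End Fin.



Lemma easy_dir (L : pzRingType) (X : lmodType L) (I : Type) (M : I -> lmodType L)
  (g : forall i, X -> M i) i : (exists m : M i, m <> 0) -> fork g -> ~ in_sum_others g i.
Proof.
move=> [m0 Hm0] Hfork [s [p [Hs Heq]]].
pose t := i :: cdedup s.
pose f := fun k : 'I_(size t) => nth i t k.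
have Hnd : List.NoDup t.
  constructor; last exact: cdedup_nodup.
  by rewrite cdedup_in => /Hs.
have finj : injective f.
  by move=> a b E; apply/val_inj; exact: (nodup_inj Hnd (ltn_ord a) (ltn_ord b) E).
apply: (Hfork _ f finj).
pose k0 : 'I_(size t) := Ordinal (ltn0Sn (size (cdedup s))).
have Hsk : forall j, List.In j s -> exists k, f k = j /\ k != k0.
  move=> j; rewrite -cdedup_in => /(in_nth i) [n [Hn E]].
  by exists (Ordinal (Hn : (n.+1 < size t)%N)).
pose S := fun v : dsum (fun k => M (f k)) => getc v i = \sum_(j <- s) p j (getc v j).
pose T := fun v : dsum (fun k => M (f k)) => forall k, k != k0 -> v k = 0.
have gs0 : forall v j, T v -> List.In j s -> getc v j = 0.
  by move=> v j Hv /Hsk [k [<- Hk]]; rewrite getc_f // Hv.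
have Hgi : forall v : dsum (fun k => M (f k)), @getc _ _ M _ f v i = v k0 by move=> v; exact (getc_f finj v k0).
pose DS := dsum (fun k => M (f k)).
have G0 : forall j, @getc _ _ M _ f (0 : DS) j = 0 := fun j => linear0 (getcL M f j).
have GD : forall j (u v : DS), getc (u + v) j = getc u j + getc v j := fun j => linearD (getcL M f j).
have GZ : forall j a (u : DS), getc (a *: u) j = a *: getc u j := fun j => linearZZ (getcL M f j).
have GB : forall j (u v : DS), getc (u - v) j = getc u j - getc v j := fun j => linearB (getcL M f j).
exists S; split.
- exists T; split.
  + split.
    * by rewrite /S G0 big1 // => j _; rewrite G0 linear0.
    * move=> u v; rewrite /S => Hu Hv.
      rewrite GD Hu Hv -big_split /=.
      by apply: eq_bigr => j _; rewrite GD linearD.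
    * move=> a u; rewrite /S => Hu.
      rewrite GZ Hu scaler_sumr.
      by apply: eq_bigr => j _; rewrite GZ linearZZ.
  + split.
    * by move=> k _; rewrite ds0E.
    * by move=> u v Hu Hv k Hk; rewrite dsD Hu ?Hv ?addr0.
    * by move=> a u Hu k Hk; rewrite dsZ Hu ?scaler0.
  + move=> v Hv Ht; apply: dsP => k; rewrite ds0E.
    case: (eqVneq k k0) => [->|Hk]; last exact: Ht.
    rewrite -Hgi Hv; apply: sum_in0 => j Hj; by rewrite gs0 ?linear0.
  + move=> v.
    pose tv := @dsing _ _ (fun k => M (f k)) k0 (@getc _ _ M _ f v i - \sum_(j <- s) p j (getc v j)).
    have tvE : tv k0 = @getc _ _ M _ f v i - \sum_(j <- s) p j (getc v j) := dsing_eq _.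
    have Ttv : T tv by move=> k Hk; rewrite dsing_neq // eq_sym.
    exists (v - tv), tv; split=> //; last by rewrite subrK.
    rewrite /S GB.
    have -> : \sum_(j <- s) p j (getc (v - tv) j) = \sum_(j <- s) p j (getc v j).
      apply: sum_in_eq => j Hj; by rewrite GB (gs0 tv j Ttv Hj) subr0.
    by rewrite Hgi (Hgi tv) tvE Hgi opprB addrC subrK.
- exists (dsing (m0 : M (f k0))); rewrite /S Hgi dsing_eq.
  rewrite sum_in0; first exact: Hm0.
  move=> j Hj; rewrite gs0 ?linear0 // => k Hk; by rewrite dsing_neq // eq_sym.
- move=> x; rewrite /S.
  have gE : forall j, (exists k, f k = j) -> getc [ffun k => g (f k) x] j = g j x.
    by move=> j [k <-]; rewrite getc_f // ffunE.
  rewrite gE; last by exists k0.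
  rewrite Heq; apply: sum_in_eq => j Hj; rewrite gE //.
  by have [k [E _]] := Hsk j Hj; exists k.
Qed.

Unset Implicit Arguments.
Theorem lemma13p1 (L : pzRingType) (X : lmodType L) (I : Type) (M : I -> lmodType L)
    (g : forall i : I, {linear X -> M i}) :
  artin_algebra L ->
  finite_length X ->
  (forall i, finite_length (M i)) ->
  (forall i, indecomposable (M i)) ->
  (forall i, exists x : X, g i x <> 0) ->
  (fork (fun i => (g i : X -> M i)) <->
   forall i, ~ in_sum_others (fun i => (g i : X -> M i)) i).
Proof.
move=> _ _ HM Hind _; split.
  move=> Hf i; apply: easy_dir => //.
  by case: (Hind i) => [[m Hm] _]; exists m.
move=> H J f finj [S [HS Hp Himg]].
pose N := fun j => M (f j).
pose gJ := fun x : X => [ffun j => g (f j) x] : dsum N.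
have [k [q [ql Hq]]] := @hard_core L J N X gJ (fun j => HM (f j)) (fun j => Hind (f j))
  (ex_intro _ S (And3 HS Hp Himg)).
apply: (H (f k)).
pose Q := fun l => mklin (ql l) : {linear M (f l) -> M (f k)}.
exists (map f [seq l <- index_enum J | l != k]), (ptrans Q); split.
  have Hr : forall r : seq J, (forall l, l \in r -> l != k) ->
      forall j, List.In j (map f r) -> j <> f k.
    elim=> [|y r IH] Hr j //= [E|Hj].
      move=> E'; rewrite -E in E'; have E2 := finj _ _ E'.
      by move: (Hr y (mem_head _ _)); rewrite E2 eqxx.
    by apply: IH => // l Hl; apply: Hr; rewrite in_cons Hl orbT.
  apply: Hr => l; by rewrite mem_filter => /andP [].
move=> x; rewrite big_map big_filter.
have := Hq x; rewrite /gJ ffunE => ->.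
by apply: eq_bigr => l _; rewrite ffunE ptrans_f.
Qed.
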